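(* For all complex $y$, $$\sum_{n=0}^{\infty}\frac{C_n}{2^n}R_n(y)=e^{y}\left(1-I_0(y)+\sum_{n=0}^{\infty}\frac{y^{2n+1}}{4^n(n!)^2(2n+1)}\right)=e^{y}\left(1+(y-1)I_0(y)+\frac{\pi y}{2}\big[I_0(y)\mathbf{L}_1(y)-I_1(y)\mathbf{L}_0(y)\big]\right).$$
   Context: For an integer $n\ge 0$ and complex $y$, $R_n(y)=e^y-1-\frac{y}{1!}-\frac{y^2}{2!}-\dots-\frac{y^n}{n!}=e^y-\sum_{k=0}^n\frac{y^k}{k!}$. $C_n=\frac{1}{n+1}\binom{2n}{n}$ are the Catalan numbers. $I_0(z)=\sum_{n\ge0}\frac{z^{2n}}{4^n(n!)^2}$ and $I_1=I_0'$ are the modified Bessel functions of the first kind; $\mathbf{L}_0,\mathbf{L}_1$ are the modified Struve functions of orders $0$ and $1$. *)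

(* Defs.v *)
From Stdlib Require Import Reals Factorial.
From Coquelicot Require Import Coquelicot.

Open Scope C_scope.

(* Sum of a complex series (meaningful when it converges): componentwise sums. *)
Definition CSeries (a : nat -> C) : C :=
  (Series (fun n => fst (a n)), Series (fun n => snd (a n))).

Definition Cexp (y : C) : C := CSeries (fun k => y ^ k / RtoC (INR (fact k))).

Definition Rrem (n : nat) (y : C) : C :=
  Cexp y - sum_n (fun k => y ^ k / RtoC (INR (fact k))) n.

Definition Catalan (n : nat) : R := (Binomial.C (2 * n) n / INR (n + 1))%R.

Definition BesselI0 (z : C) : C :=
  CSeries (fun n => z ^ (2 * n) / RtoC (4 ^ n * (INR (fact n)) ^ 2)%R).

Definition BesselI1 (z : C) : C :=
  CSeries (fun n => (z / RtoC 2) ^ (2 * n + 1) / RtoC (INR (fact n) * INR (fact (n + 1)))%R).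

(* Gamma at half-integers: Gamma(m + 1/2) = (2m)! sqrt(pi) / (4^m m!) *)
Definition Gamma_half (m : nat) : R :=
  (INR (fact (2 * m)) * sqrt PI / (4 ^ m * INR (fact m)))%R.

Definition StruveL0 (z : C) : C :=
  CSeries (fun k => (z / RtoC 2) ^ (2 * k + 1) / RtoC (Gamma_half (k + 1) ^ 2)%R).
Definition StruveL1 (z : C) : C :=
  CSeries (fun k => (z / RtoC 2) ^ (2 * k + 2) /
                    RtoC (Gamma_half (k + 1) * Gamma_half (k + 2))%R).

(* Main.v *)
Require Import Defs.
From Stdlib Require Import Reals Factorial Lra Lia Arith FunctionalExtensionality.
From Coquelicot Require Import Coquelicot.
Open Scope R_scope.

Definition term (c : nat -> R) (y : C) (k : nat) : C := (RtoC (c k) * y ^ k)%C.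
Definition PSC (c : nat -> R) (y : C) : C := CSeries (term c y).
Definition ENT (c : nat -> R) : Prop :=
  forall r, 0 <= r -> ex_series (fun k => Rabs (c k) * r ^ k).

Lemma fst_term c y k : fst (term c y k) = c k * fst (y ^ k)%C.
Proof. unfold term; simpl; ring. Qed.
Lemma snd_term c y k : snd (term c y k) = c k * snd (y ^ k)%C.
Proof. unfold term; simpl; ring. Qed.

Lemma fst_pow_bound (y : C) k : Rabs (fst (y ^ k)%C) <= Cmod y ^ k.
Proof. rewrite <- Cmod_pow. apply re_le_Cmod. Qed.
Lemma snd_pow_bound (y : C) k : Rabs (snd (y ^ k)%C) <= Cmod y ^ k.
Proof. rewrite <- Cmod_pow. eapply Rle_trans. apply Rmax_r. apply Rmax_Cmod. Qed.

Lemma ex_fst_term c y : ENT c -> ex_series (fun k => fst (term c y k)).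
Proof.
  intros H. apply (@ex_series_le R_AbsRing R_CompleteNormedModule _ (fun k => Rabs (c k) * Cmod y ^ k)).
  - intros k. rewrite fst_term. change norm with Rabs. simpl. rewrite Rabs_mult.
    apply Rmult_le_compat_l. apply Rabs_pos. apply fst_pow_bound.
  - apply H, Cmod_ge_0.
Qed.
Lemma ex_snd_term c y : ENT c -> ex_series (fun k => snd (term c y k)).
Proof.
  intros H. apply (@ex_series_le R_AbsRing R_CompleteNormedModule _ (fun k => Rabs (c k) * Cmod y ^ k)).
  - intros k. rewrite snd_term. change norm with Rabs. simpl. rewrite Rabs_mult.
    apply Rmult_le_compat_l. apply Rabs_pos. apply snd_pow_bound.
  - apply H, Cmod_ge_0.
Qed.

Lemma lim_C (u : nat -> C) (l1 l2 : R) :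
  is_lim_seq (fun n => fst (u n)) l1 -> is_lim_seq (fun n => snd (u n)) l2 ->
  filterlim u eventually (locally (l1, l2)).
Proof.
  intros H1 H2 P [eps HP].
  assert (E1 : eventually (fun n => ball l1 eps (fst (u n)))) by
    exact (H1 (ball l1 eps) (locally_ball l1 eps)).
  assert (E2 : eventually (fun n => ball l2 eps (snd (u n)))) by
    exact (H2 (ball l2 eps) (locally_ball l2 eps)).
  unfold filtermap. generalize (filter_and _ _ E1 E2). apply filter_imp.
  intros n [Ha Hb]. apply HP. split; assumption.
Qed.

Lemma fst_sum_n (a : nat -> C) n : fst (sum_n a n) = sum_n (fun k => fst (a k)) n.
Proof.
  induction n. - rewrite !sum_O. reflexivity.
  - rewrite !sum_Sn. simpl. rewrite <- IHn. reflexivity.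
Qed.
Lemma snd_sum_n (a : nat -> C) n : snd (sum_n a n) = sum_n (fun k => snd (a k)) n.
Proof.
  induction n. - rewrite !sum_O. reflexivity.
  - rewrite !sum_Sn. simpl. rewrite <- IHn. reflexivity.
Qed.

Lemma is_series_C (a : nat -> C) (l1 l2 : R) :
  is_series (fun k => fst (a k)) l1 -> is_series (fun k => snd (a k)) l2 ->
  is_series a (l1, l2).
Proof.
  intros H1 H2. unfold is_series. apply lim_C.
  - eapply is_lim_seq_ext. intros n. symmetry. apply fst_sum_n. exact H1.
  - eapply is_lim_seq_ext. intros n. symmetry. apply snd_sum_n. exact H2.
Qed.

Lemma CSeries_correct (a : nat -> C) :
  ex_series (fun k => fst (a k)) -> ex_series (fun k => snd (a k)) ->
  is_series a (CSeries a).
Proof.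
  intros H1 H2. unfold CSeries. apply is_series_C; apply Series_correct; assumption.
Qed.

Lemma PSC_correct c y : ENT c -> is_series (term c y) (PSC c y).
Proof. intros H. apply CSeries_correct. apply ex_fst_term, H. apply ex_snd_term, H. Qed.

Lemma CSeries_ext (a b : nat -> C) : (forall n, a n = b n) -> CSeries a = CSeries b.
Proof. intros H. unfold CSeries. f_equal; apply Series_ext; intros n; rewrite H; auto. Qed.

Definition X (c : nat -> R) (k : nat) : R := match k with O => 0 | S m => c m end.
Definition conv (c d : nat -> R) (n : nat) : R := sum_f_R0 (fun k => c k * d (n - k)%nat) n.

Lemma ex_exp_series x : ex_series (fun k => x ^ k / INR (fact k)).
Proof.
  destruct (exist_exp x) as [l Hl]. exists l.
  apply is_series_Reals in Hl.
  eapply is_series_ext; [| exact Hl]. intros n; simpl. unfold Rdiv; ring.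
Qed.

Lemma ENT_bound c M B : 0 <= B -> (forall k, Rabs (c k) <= M * B ^ k / INR (fact k)) -> ENT c.
Proof.
  intros HB H r Hr.
  apply (@ex_series_le R_AbsRing R_CompleteNormedModule _ (fun k => M * ((B * r) ^ k / INR (fact k)))).
  - intros k. change norm with Rabs. simpl.
    rewrite Rabs_pos_eq. 2: apply Rmult_le_pos; [apply Rabs_pos | apply pow_le; auto].
    rewrite Rpow_mult_distr.
    replace (M * (B ^ k * r ^ k / INR (fact k))) with ((M * B ^ k / INR (fact k)) * r ^ k) by (unfold Rdiv; ring).
    apply Rmult_le_compat_r. apply pow_le; auto. apply H.
  - apply (@ex_series_scal R_AbsRing R_NormedModule M). apply ex_exp_series.
Qed.

Lemma ENT_lin a b c d : ENT c -> ENT d -> ENT (fun k => a * c k + b * d k).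
Proof.
  intros Hc Hd r Hr.
  apply (@ex_series_le R_AbsRing R_CompleteNormedModule _
     (fun k => Rabs a * (Rabs (c k) * r ^ k) + Rabs b * (Rabs (d k) * r ^ k))).
  - intros k. change norm with Rabs. simpl.
    rewrite Rabs_pos_eq. 2: apply Rmult_le_pos; [apply Rabs_pos | apply pow_le; auto].
    eapply Rle_trans. apply Rmult_le_compat_r. apply pow_le; auto. apply Rabs_triang.
    rewrite !Rabs_mult. assert (0 <= r ^ k) by (apply pow_le; auto). nra.
  - apply (@ex_series_plus R_AbsRing R_NormedModule).
    apply (@ex_series_scal R_AbsRing R_NormedModule). apply Hc; auto.
    apply (@ex_series_scal R_AbsRing R_NormedModule). apply Hd; auto.
Qed.

Lemma ENT_ext c d : (forall k, c k = d k) -> ENT c -> ENT d.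
Proof. intros H Hc r Hr. eapply ex_series_ext. 2: apply (Hc r Hr). intros k; simpl; rewrite H; auto. Qed.

Lemma ENT_X c : ENT c -> ENT (X c).
Proof.
  intros Hc r Hr. apply ex_series_incr_1. simpl.
  eapply ex_series_ext. 2: apply (ex_series_scal_r r), (Hc r Hr).
  intros k; simpl; ring.
Qed.

Lemma ENT_conv c d : ENT c -> ENT d -> ENT (conv c d).
Proof.
  intros Hc Hd r Hr.
  set (a := fun k => Rabs (c k) * r ^ k). set (b := fun k => Rabs (d k) * r ^ k).
  apply (@ex_series_le R_AbsRing R_CompleteNormedModule _
     (fun n => sum_f_R0 (fun k => a k * b (n - k)%nat) n)).
  - intros n. change norm with Rabs. simpl.
    rewrite Rabs_pos_eq. 2: apply Rmult_le_pos; [apply Rabs_pos | apply pow_le; auto].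
    unfold conv. eapply Rle_trans. apply Rmult_le_compat_r. apply pow_le; auto.
    apply Rsum_abs. rewrite Rmult_comm, scal_sum. right. apply sum_eq. intros i Hi.
    unfold a, b. rewrite Rabs_mult.
    replace (r ^ n) with (r ^ i * r ^ (n - i)) by (rewrite <- pow_add; f_equal; lia). ring.
  - eexists. apply is_series_mult_pos.
    apply Series_correct, Hc; auto. apply Series_correct, Hd; auto.
    intros; unfold a; apply Rmult_le_pos; [apply Rabs_pos | apply pow_le; auto].
    intros; unfold b; apply Rmult_le_pos; [apply Rabs_pos | apply pow_le; auto].
Qed.

Lemma ex_abs_fst_term c y : ENT c -> ex_series (fun k => Rabs (fst (term c y k))).
Proof.
  intros H. apply (@ex_series_le R_AbsRing R_CompleteNormedModule _ (fun k => Rabs (c k) * Cmod y ^ k)).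
  - intros k. rewrite fst_term. change norm with Rabs. simpl. rewrite Rabs_Rabsolu, Rabs_mult.
    apply Rmult_le_compat_l. apply Rabs_pos. apply fst_pow_bound.
  - apply H, Cmod_ge_0.
Qed.
Lemma ex_abs_snd_term c y : ENT c -> ex_series (fun k => Rabs (snd (term c y k))).
Proof.
  intros H. apply (@ex_series_le R_AbsRing R_CompleteNormedModule _ (fun k => Rabs (c k) * Cmod y ^ k)).
  - intros k. rewrite snd_term. change norm with Rabs. simpl. rewrite Rabs_Rabsolu, Rabs_mult.
    apply Rmult_le_compat_l. apply Rabs_pos. apply snd_pow_bound.
  - apply H, Cmod_ge_0.
Qed.

Lemma fst_lin a b (z w : C) : fst (RtoC a * z + RtoC b * w)%C = a * fst z + b * fst w.
Proof. destruct z, w; simpl; ring. Qed.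
Lemma snd_lin a b (z w : C) : snd (RtoC a * z + RtoC b * w)%C = a * snd z + b * snd w.
Proof. destruct z, w; simpl; ring. Qed.
Lemma fst_mul (z w : C) : fst (z * w)%C = fst z * fst w - snd z * snd w.
Proof. destruct z, w; simpl; ring. Qed.
Lemma snd_mul (z w : C) : snd (z * w)%C = fst z * snd w + snd z * fst w.
Proof. destruct z, w; simpl; ring. Qed.

Lemma PSC_lin a b c d y : ENT c -> ENT d ->
  PSC (fun k => a * c k + b * d k) y = (RtoC a * PSC c y + RtoC b * PSC d y)%C.
Proof.
  intros Hc Hd. apply injective_projections; [rewrite fst_lin | rewrite snd_lin];
  unfold PSC, CSeries; cbn [fst snd].
  - rewrite (Series_ext _ (fun k => a * fst (term c y k) + b * fst (term d y k))).
    2: intros k; rewrite !fst_term; ring.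
    rewrite Series_plus. rewrite !Series_scal_l. ring.
    apply (@ex_series_scal R_AbsRing R_NormedModule), ex_fst_term, Hc.
    apply (@ex_series_scal R_AbsRing R_NormedModule), ex_fst_term, Hd.
  - rewrite (Series_ext _ (fun k => a * snd (term c y k) + b * snd (term d y k))).
    2: intros k; rewrite !snd_term; ring.
    rewrite Series_plus. rewrite !Series_scal_l. ring.
    apply (@ex_series_scal R_AbsRing R_NormedModule), ex_snd_term, Hc.
    apply (@ex_series_scal R_AbsRing R_NormedModule), ex_snd_term, Hd.
Qed.

Lemma PSC_ext c d y : (forall k, c k = d k) -> PSC c y = PSC d y.
Proof. intros H. unfold PSC. apply CSeries_ext. intros n; unfold term; rewrite H; auto. Qed.

Lemma PSC_X c y : ENT c -> (y * PSC c y)%C = PSC (X c) y.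
Proof.
  intros Hc. apply injective_projections; [rewrite fst_mul | rewrite snd_mul];
  unfold PSC, CSeries; cbn [fst snd].
  - rewrite (Series_incr_1 (fun k => fst (term (X c) y k))).
    2: apply ex_fst_term, ENT_X, Hc.
    rewrite (Series_ext (fun k => fst (term (X c) y (S k))) (fun k => fst y * fst (term c y k) - snd y * snd (term c y k))).
    2: intros k; rewrite !fst_term, snd_term; simpl; ring.
    rewrite Series_minus, !Series_scal_l. rewrite fst_term. change (X c 0) with 0. ring.
    apply (@ex_series_scal R_AbsRing R_NormedModule), ex_fst_term, Hc.
    apply (@ex_series_scal R_AbsRing R_NormedModule), ex_snd_term, Hc.
  - rewrite (Series_incr_1 (fun k => snd (term (X c) y k))).
    2: apply ex_snd_term, ENT_X, Hc.
    rewrite (Series_ext (fun k => snd (term (X c) y (S k))) (fun k => fst y * snd (term c y k) + snd y * fst (term c y k))).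
    2: intros k; rewrite !snd_term, fst_term; simpl; ring.
    rewrite Series_plus, !Series_scal_l. rewrite snd_term. change (X c 0) with 0. ring.
    apply (@ex_series_scal R_AbsRing R_NormedModule), ex_snd_term, Hc.
    apply (@ex_series_scal R_AbsRing R_NormedModule), ex_fst_term, Hc.
Qed.

Lemma Cpow_add (y : C) a b : (y ^ (a + b) = y ^ a * y ^ b)%C.
Proof. induction a; simpl. ring. rewrite IHa. ring. Qed.

Lemma Series_cauchy (a b : nat -> R) :
  ex_series (fun n => Rabs (a n)) -> ex_series (fun n => Rabs (b n)) ->
  Series (fun n => sum_f_R0 (fun k => a k * b (n - k)%nat) n) = Series a * Series b.
Proof.
  intros Ha Hb. apply is_series_unique. apply is_series_mult; auto.
  apply Series_correct, ex_series_Rabs, Ha. apply Series_correct, ex_series_Rabs, Hb.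
Qed.

Lemma ex_cauchy (a b : nat -> R) :
  ex_series (fun n => Rabs (a n)) -> ex_series (fun n => Rabs (b n)) ->
  ex_series (fun n => sum_f_R0 (fun k => a k * b (n - k)%nat) n).
Proof.
  intros Ha Hb. eexists. apply is_series_mult; auto.
  apply Series_correct, ex_series_Rabs, Ha. apply Series_correct, ex_series_Rabs, Hb.
Qed.

Lemma PSC_conv c d y : ENT c -> ENT d -> (PSC c y * PSC d y)%C = PSC (conv c d) y.
Proof.
  intros Hc Hd. apply injective_projections; [rewrite fst_mul | rewrite snd_mul];
  unfold PSC, CSeries; cbn [fst snd].
  - rewrite (Series_ext (fun n => fst (term (conv c d) y n)) (fun n =>
       sum_f_R0 (fun k => fst (term c y k) * fst (term d y (n - k)%nat)) n -
       sum_f_R0 (fun k => snd (term c y k) * snd (term d y (n - k)%nat)) n)).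
    + rewrite Series_minus.
      rewrite (Series_cauchy (fun k => fst (term c y k)) (fun k => fst (term d y k))).
      rewrite (Series_cauchy (fun k => snd (term c y k)) (fun k => snd (term d y k))).
      reflexivity. all: auto using ex_abs_fst_term, ex_abs_snd_term.
      apply (ex_cauchy (fun k => fst (term c y k)) (fun k => fst (term d y k))); auto using ex_abs_fst_term, ex_abs_snd_term.
      apply (ex_cauchy (fun k => snd (term c y k)) (fun k => snd (term d y k))); auto using ex_abs_fst_term, ex_abs_snd_term.
    + intros n. rewrite fst_term. rewrite <- minus_sum. unfold conv. rewrite (Rmult_comm (sum_f_R0 _ n)), scal_sum.
      apply sum_eq. intros i Hi. rewrite !fst_term, !snd_term.
      assert (Hn : (y ^ n = y ^ i * y ^ (n - i))%C) by (rewrite <- Cpow_add; f_equal; lia).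
      rewrite Hn, ?fst_mul, ?snd_mul. ring.
  - rewrite (Series_ext (fun n => snd (term (conv c d) y n)) (fun n =>
       sum_f_R0 (fun k => fst (term c y k) * snd (term d y (n - k)%nat)) n +
       sum_f_R0 (fun k => snd (term c y k) * fst (term d y (n - k)%nat)) n)).
    + rewrite Series_plus.
      rewrite (Series_cauchy (fun k => fst (term c y k)) (fun k => snd (term d y k))).
      rewrite (Series_cauchy (fun k => snd (term c y k)) (fun k => fst (term d y k))).
      reflexivity. all: auto using ex_abs_fst_term, ex_abs_snd_term.
      apply (ex_cauchy (fun k => fst (term c y k)) (fun k => snd (term d y k))); auto using ex_abs_fst_term, ex_abs_snd_term.
      apply (ex_cauchy (fun k => snd (term c y k)) (fun k => fst (term d y k))); auto using ex_abs_fst_term, ex_abs_snd_term.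
    + intros n. rewrite snd_term. rewrite <- plus_sum. unfold conv. rewrite (Rmult_comm (sum_f_R0 _ n)), scal_sum.
      apply sum_eq. intros i Hi. rewrite !fst_term, !snd_term.
      assert (Hn : (y ^ n = y ^ i * y ^ (n - i))%C) by (rewrite <- Cpow_add; f_equal; lia).
      rewrite Hn, ?fst_mul, ?snd_mul. ring.
Qed.

Definition delta (k : nat) : R := match k with O => 1 | _ => 0 end.
Lemma ENT_delta : ENT delta.
Proof. apply (ENT_bound _ 1 1). lra. intros [|k]; unfold delta; rewrite ?Rabs_R1, ?Rabs_R0.
  simpl; lra. apply Rmult_le_pos. rewrite pow1; lra. apply Rlt_le, Rinv_0_lt_compat, INR_fact_lt_0. Qed.

Lemma Series_zero : Series (fun _ => 0) = 0.
Proof. rewrite (Series_ext _ (fun n => 0 * 0)) by (intros; ring). rewrite Series_scal_l. ring. Qed.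

Lemma PSC_delta y : PSC delta y = RtoC 1.
Proof.
  apply injective_projections; unfold PSC, CSeries; cbn [fst snd RtoC].
  - rewrite Series_incr_1. rewrite Series_ext with (b := fun _ => 0). rewrite Series_zero.
    rewrite fst_term. simpl. ring. intros k. rewrite fst_term. unfold delta. ring.
    apply ex_fst_term, ENT_delta.
  - rewrite Series_incr_1. rewrite Series_ext with (b := fun _ => 0). rewrite Series_zero.
    rewrite snd_term. simpl. ring. intros k. rewrite snd_term. unfold delta. ring.
    apply ex_snd_term, ENT_delta.
Qed.

Definition padE (u : nat -> R) (k : nat) : R := if Nat.even k then u (Nat.div2 k) else 0.
Definition padO (u : nat -> R) (k : nat) : R := if Nat.even k then 0 else u (Nat.div2 k).

Lemma even_div2_double m : Nat.even (2 * m) = true /\ Nat.div2 (2 * m) = m.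
Proof.
  induction m. simpl; auto.
  replace (2 * S m)%nat with (S (S (2 * m))) by lia.
  change (Nat.even (S (S (2 * m)))) with (Nat.even (2 * m)).
  change (Nat.div2 (S (S (2 * m)))) with (S (Nat.div2 (2 * m))).
  destruct IHm as [H1 H2]. rewrite H1, H2. auto.
Qed.
Lemma even_div2_sdouble m : Nat.even (2 * m + 1) = false /\ Nat.div2 (2 * m + 1) = m.
Proof.
  induction m. simpl; auto.
  replace (2 * S m + 1)%nat with (S (S (2 * m + 1))) by lia.
  change (Nat.even (S (S (2 * m + 1)))) with (Nat.even (2 * m + 1)).
  change (Nat.div2 (S (S (2 * m + 1)))) with (S (Nat.div2 (2 * m + 1))).
  destruct IHm as [H1 H2]. rewrite H1, H2. auto.
Qed.

Lemma padE_even u m : padE u (2 * m) = u m.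
Proof. unfold padE. destruct (even_div2_double m) as [-> ->]. auto. Qed.
Lemma padE_odd u m : padE u (2 * m + 1) = 0.
Proof. unfold padE. destruct (even_div2_sdouble m) as [-> _]. auto. Qed.
Lemma padO_even u m : padO u (2 * m) = 0.
Proof. unfold padO. destruct (even_div2_double m) as [-> _]. auto. Qed.
Lemma padO_odd u m : padO u (2 * m + 1) = u m.
Proof. unfold padO. destruct (even_div2_sdouble m) as [-> ->]. auto. Qed.

Lemma parity n : exists m, n = (2 * m)%nat \/ n = (2 * m + 1)%nat.
Proof.
  induction n. exists 0%nat; lia.
  destruct IHn as [m [H|H]]. exists m; lia. exists (S m); lia.
Qed.

Lemma sum_n_even (f : nat -> R) : (forall m, f (2 * m + 1)%nat = 0) ->
  forall n, sum_n (fun m => f (2 * m)%nat) n = sum_n f (2 * n + 1).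
Proof.
  intros H n. induction n.
  - rewrite sum_O. replace (2*0+1)%nat with 1%nat by lia. rewrite sum_Sn, sum_O.
    change plus with Rplus. replace (f 1%nat) with 0 by (symmetry; apply (H 0%nat)). simpl; ring.
  - rewrite sum_Sn, IHn. replace (2 * S n + 1)%nat with (S (S (2 * n + 1))) by lia.
    rewrite !sum_Sn. replace (S (S (2 * n + 1))) with (2 * S n + 1)%nat by lia.
    rewrite H. replace (S (2 * n + 1)) with (2 * S n)%nat by lia.
    change plus with Rplus. symmetry; apply Rplus_0_r.
Qed.
Lemma sum_n_odd (f : nat -> R) : (forall m, f (2 * m)%nat = 0) ->
  forall n, sum_n (fun m => f (2 * m + 1)%nat) n = sum_n f (2 * n + 1).
Proof.
  intros H n. induction n.
  - rewrite sum_O. replace (2*0+1)%nat with 1%nat by lia. rewrite sum_Sn, sum_O.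
    change plus with Rplus. replace (f 0%nat) with 0 by (symmetry; apply (H 0%nat)). simpl; ring.
  - rewrite sum_Sn, IHn. replace (2 * S n + 1)%nat with (S (S (2 * n + 1))) by lia.
    rewrite !sum_Sn. replace (S (2 * n + 1)) with (2 * S n)%nat by lia.
    rewrite H. replace (S (2 * S n)) with (2 * S n + 1)%nat by lia.
    change plus with Rplus. f_equal. symmetry; apply Rplus_0_r.
Qed.

Lemma subseq_2n1 : filterlim (fun n => (2 * n + 1)%nat) eventually eventually.
Proof. apply eventually_subseq. intros; lia. Qed.

Lemma is_series_even (f : nat -> R) l : (forall m, f (2 * m + 1)%nat = 0) ->
  is_series f l -> is_series (fun m => f (2 * m)%nat) l.
Proof.
  intros H Hf. unfold is_series.
  eapply filterlim_ext. intros n. symmetry. apply (sum_n_even f H).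
  eapply filterlim_comp. apply subseq_2n1. exact Hf.
Qed.
Lemma is_series_odd (f : nat -> R) l : (forall m, f (2 * m)%nat = 0) ->
  is_series f l -> is_series (fun m => f (2 * m + 1)%nat) l.
Proof.
  intros H Hf. unfold is_series.
  eapply filterlim_ext. intros n. symmetry. apply (sum_n_odd f H).
  eapply filterlim_comp. apply subseq_2n1. exact Hf.
Qed.

Lemma CSeries_padE u y : ENT (padE u) ->
  CSeries (fun n => RtoC (u n) * y ^ (2 * n))%C = PSC (padE u) y.
Proof.
  intros H. unfold PSC, CSeries. f_equal.
  - apply is_series_unique.
    eapply is_series_ext. 2: apply is_series_even.
    3: apply Series_correct, ex_fst_term, H.
    intros m; cbv beta. rewrite fst_term, padE_even. simpl. ring.
    intros m; cbv beta. rewrite fst_term, padE_odd. ring.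
  - apply is_series_unique.
    eapply is_series_ext. 2: apply is_series_even.
    3: apply Series_correct, ex_snd_term, H.
    intros m; cbv beta. rewrite snd_term, padE_even. simpl. ring.
    intros m; cbv beta. rewrite snd_term, padE_odd. ring.
Qed.

Lemma CSeries_padO u y : ENT (padO u) ->
  CSeries (fun n => RtoC (u n) * y ^ (2 * n + 1))%C = PSC (padO u) y.
Proof.
  intros H. unfold PSC, CSeries. f_equal.
  - apply is_series_unique.
    eapply is_series_ext. 2: apply is_series_odd.
    3: apply Series_correct, ex_fst_term, H.
    intros m; cbv beta. rewrite fst_term, padO_odd. simpl. ring.
    intros m; cbv beta. rewrite fst_term, padO_even. ring.
  - apply is_series_unique.
    eapply is_series_ext. 2: apply is_series_odd.
    3: apply Series_correct, ex_snd_term, H.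
    intros m; cbv beta. rewrite snd_term, padO_odd. simpl. ring.
    intros m; cbv beta. rewrite snd_term, padO_even. ring.
Qed.

Definition Dv (c : nat -> R) (k : nat) : R := INR (S k) * c (S k).
Definition Lin (a : R) (f : nat -> R) (b : R) (g : nat -> R) (k : nat) : R := a * f k + b * g k.
Definition zero (k : nat) : R := 0.

Lemma Dv_Lin a f b g : Dv (Lin a f b g) = Lin a (Dv f) b (Dv g).
Proof. apply functional_extensionality; intros k; unfold Dv, Lin; ring. Qed.
Lemma X_Lin a f b g : X (Lin a f b g) = Lin a (X f) b (X g).
Proof. apply functional_extensionality; intros [|k]; unfold X, Lin; simpl; ring. Qed.
Lemma conv_Lin_l a f b g h : conv (Lin a f b g) h = Lin a (conv f h) b (conv g h).
Proof.
  apply functional_extensionality; intros n; unfold conv, Lin.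
  rewrite !scal_sum, <- plus_sum. apply sum_eq; intros; ring.
Qed.
Lemma conv_Lin_r a f b g h : conv h (Lin a f b g) = Lin a (conv h f) b (conv h g).
Proof.
  apply functional_extensionality; intros n; unfold conv, Lin.
  rewrite !scal_sum, <- plus_sum. apply sum_eq; intros; ring.
Qed.
Lemma conv_X_l c d : conv (X c) d = X (conv c d).
Proof.
  apply functional_extensionality; intros [|m]; unfold conv.
  - simpl. ring.
  - rewrite decomp_sum by lia. simpl (X c 0). rewrite Rmult_0_l, Rplus_0_l. simpl pred.
    apply sum_eq. intros i Hi. reflexivity.
Qed.
Lemma conv_X_r c d : conv c (X d) = X (conv c d).
Proof.
  apply functional_extensionality; intros [|m].
  - unfold conv; simpl. ring.
  - change (X (conv c d) (S m)) with (conv c d m). unfold conv. rewrite tech5. rewrite Nat.sub_diag. simpl (X d 0). rewrite Rmult_0_r, Rplus_0_r.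
    apply sum_eq. intros i Hi. replace (S m - i)%nat with (S (m - i)) by lia. reflexivity.
Qed.

Lemma conv_delta_r c : conv c delta = c.
Proof.
  apply functional_extensionality; intros [|m]; unfold conv.
  - simpl. ring.
  - rewrite tech5, Nat.sub_diag. simpl (delta 0). rewrite sum_eq_R0. ring.
    intros i Hi. replace (S m - i)%nat with (S (m - i)) by lia. simpl. ring.
Qed.
Lemma conv_zero_r c : conv c zero = zero.
Proof.
  apply functional_extensionality; intros n; unfold conv, zero.
  apply sum_eq_R0. intros; ring.
Qed.

Lemma Dv_conv c d : Dv (conv c d) = Lin 1 (conv (Dv c) d) 1 (conv c (Dv d)).
Proof.
  apply functional_extensionality; intros n; unfold Dv at 1, Lin. unfold conv at 1.
  transitivity (sum_f_R0 (fun k => INR k * (c k * d (S n - k)%nat)) (S n) +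
                sum_f_R0 (fun k => INR (S n - k) * (c k * d (S n - k)%nat)) (S n)).
  { rewrite scal_sum, <- plus_sum. apply sum_eq; intros k Hk. rewrite minus_INR by lia. ring. }
  rewrite decomp_sum by lia. rewrite tech5, Nat.sub_diag. simpl pred.
  replace (INR 0) with 0 by reflexivity.
  unfold conv, Dv. ring_simplify.
  f_equal.
  - apply sum_eq; intros i Hi. simpl (S n - S i)%nat. ring.
  - apply sum_eq; intros i Hi. replace (S n - i)%nat with (S (n - i)) by lia. ring.
Qed.

Lemma Dv_X c : Dv (X c) = Lin 1 c 1 (X (Dv c)).
Proof.
  apply functional_extensionality; intros [|m]; unfold Dv, Lin, X; rewrite ?S_INR; simpl; ring.
Qed.
Lemma Dv_delta : Dv delta = zero.
Proof. apply functional_extensionality; intros k; unfold Dv, zero, delta; ring. Qed.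
Lemma Dv_zero : Dv zero = zero.
Proof. apply functional_extensionality; intros k; unfold Dv, zero; ring. Qed.

Lemma Dv_eq_zero f : Dv f = zero -> f 0%nat = 0 -> f = zero.
Proof.
  intros H H0. apply functional_extensionality; intros [|n]. auto.
  unfold zero. assert (E := f_equal (fun g => g n) H). unfold Dv, zero in E. simpl in E.
  apply Rmult_integral in E. destruct E as [E|E]; auto.
  exfalso. apply (not_0_INR (S n)); auto.
Qed.

Lemma Dv_eq_self f : Dv f = f -> f 0%nat = 0 -> f = zero.
Proof.
  intros H H0. apply functional_extensionality; intros n. unfold zero. induction n; auto.
  assert (E := f_equal (fun g => g n) H). unfold Dv in E. simpl in E. rewrite IHn in E.
  apply Rmult_integral in E. destruct E as [E|E]; auto.
  exfalso. apply (not_0_INR (S n)); auto.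
Qed.

Definition a (n : nat) : R := / (4 ^ n * INR (fact n) ^ 2).
Definition b (n : nat) : R := / (2 * 4 ^ n * (INR (fact n) * INR (fact (S n)))).
Definition jj (n : nat) : R := / (4 ^ n * INR (fact n) ^ 2 * INR (2 * n + 1)).
Definition cc (k : nat) : R := / (2 * 4 ^ k * Gamma_half (S k) ^ 2).
Definition dd (k : nat) : R := / (4 * 4 ^ k * (Gamma_half (S k) * Gamma_half (S (S k)))).
Definition i0 := padE a.
Definition i1 := padO b.
Definition j := padO jj.
Definition l0 := padO cc.
Definition l1 := X (padO dd).
Definition e (k : nat) : R := / INR (fact k).

Lemma GH_pos m : 0 < Gamma_half m.
Proof.
  unfold Gamma_half. apply Rmult_lt_0_compat. apply Rmult_lt_0_compat.
  apply INR_fact_lt_0. apply sqrt_lt_R0, PI_RGT_0.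
  apply Rinv_0_lt_compat, Rmult_lt_0_compat. apply pow_lt; lra. apply INR_fact_lt_0.
Qed.

Lemma GH_S m : Gamma_half (S m) = (2 * INR m + 1) / 2 * Gamma_half m.
Proof.
  unfold Gamma_half. replace (2 * S m)%nat with (S (S (2 * m))) by lia.
  rewrite !fact_simpl, !mult_INR, !S_INR, !mult_INR. simpl pow.
  assert (H1 := INR_fact_neq_0 m). assert (H2 := INR_fact_neq_0 (2 * m)).
  assert (H3 : 4 ^ m <> 0) by (apply pow_nonzero; lra). assert (H4 := pos_INR m).
  simpl INR. field. repeat split; auto; lra.
Qed.

Lemma GH_1 : Gamma_half 1 = sqrt PI / 2.
Proof. unfold Gamma_half. simpl. field. Qed.

Lemma sqrtPI2 : sqrt PI * sqrt PI = PI.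
Proof. apply sqrt_sqrt. left; apply PI_RGT_0. Qed.

Ltac inr := rewrite ?fact_simpl, ?mult_INR, ?S_INR, ?plus_INR, ?mult_INR, ?S_INR, ?INR_0 in *.

Lemma fnz n : INR (fact n) <> 0. Proof. apply INR_fact_neq_0. Qed.
Lemma p4nz n : 4 ^ n <> 0. Proof. apply pow_nonzero; lra. Qed.
Lemma GHnz n : Gamma_half n <> 0. Proof. apply Rgt_not_eq, GH_pos. Qed.

Ltac pos m := assert (0 < INR (fact m)) by apply INR_fact_lt_0;
  assert (0 < 4 ^ m) by (apply pow_lt; lra); assert (0 <= INR m) by apply pos_INR.
Ltac closenz := repeat split; try (intro; nra); try (apply pow_nonzero; lra).

Lemma R1 : Dv i0 = i1.
Proof.
  apply functional_extensionality; intros n. unfold Dv, i0, i1.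
  destruct (parity n) as [m [-> | ->]].
  - replace (S (2 * m)) with (2 * m + 1)%nat by lia. rewrite padE_odd, padO_even. ring.
  - replace (S (2 * m + 1)) with (2 * S m)%nat by lia. rewrite padE_even, padO_odd.
    unfold a, b. simpl pow. pos m. inr. field. closenz.
Qed.

Lemma R2 : Dv j = i0.
Proof.
  apply functional_extensionality; intros n. unfold Dv, i0, j.
  destruct (parity n) as [m [-> | ->]].
  - replace (S (2 * m)) with (2 * m + 1)%nat by lia. rewrite padE_even, padO_odd.
    unfold a, jj. pos m. inr. field. closenz.
  - replace (S (2 * m + 1)) with (2 * S m)%nat by lia. rewrite padE_odd, padO_even. ring.
Qed.

Lemma padO_S_even u m : padO u (S (2 * m)) = u m.
Proof. replace (S (2 * m)) with (2 * m + 1)%nat by lia. apply padO_odd. Qed.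
Lemma padO_S_odd u m : padO u (S (2 * m + 1)) = 0.
Proof. replace (S (2 * m + 1)) with (2 * S m)%nat by lia. apply padO_even. Qed.
Lemma padE_S_even u m : padE u (S (2 * m)) = 0.
Proof. replace (S (2 * m)) with (2 * m + 1)%nat by lia. apply padE_odd. Qed.
Lemma padE_S_odd u m : padE u (S (2 * m + 1)) = u (S m).
Proof. replace (S (2 * m + 1)) with (2 * S m)%nat by lia. apply padE_even. Qed.
Lemma X_2S u m : X u (2 * S m) = u (2 * m + 1)%nat.
Proof. replace (2 * S m)%nat with (S (2 * m + 1)) by lia. reflexivity. Qed.
Lemma X_odd u m : X u (2 * m + 1) = u (2 * m)%nat.
Proof. replace (2 * m + 1)%nat with (S (2 * m)) by lia. reflexivity. Qed.
Lemma delta_2S m : delta (2 * S m) = 0.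
Proof. replace (2 * S m)%nat with (S (2 * m + 1)) by lia. reflexivity. Qed.
Lemma delta_odd m : delta (2 * m + 1) = 0.
Proof. replace (2 * m + 1)%nat with (S (2 * m)) by lia. reflexivity. Qed.

Lemma R3 : Dv (X l1) = X l0.
Proof.
  apply functional_extensionality; intros [|k].
  - unfold Dv, l1, l0. simpl. unfold padO. simpl. ring.
  - unfold Dv. change (X l1 (S (S k))) with (padO dd k). change (X l0 (S k)) with (padO cc k).
    destruct (parity k) as [m [-> | ->]].
    + rewrite !padO_even. ring.
    + rewrite !padO_odd. unfold dd, cc. rewrite (GH_S (S m)). assert (G := GH_pos (S m)).
      pos m. inr. field. closenz.
Qed.

Lemma R4 : Dv l0 = Lin (2 / PI) delta 1 l1.
Proof.
  apply functional_extensionality; intros n. unfold Dv, Lin, l0, l1.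
  destruct (parity n) as [m [-> | ->]].
  - rewrite padO_S_even. destruct m as [|m].
    + simpl. unfold padO; simpl. unfold cc. rewrite GH_1. simpl pow.
      assert (HP := PI_RGT_0). assert (Hs := sqrt_lt_R0 _ HP).
      assert (E : sqrt PI / 2 * (sqrt PI / 2 * 1) = PI / 4).
      { rewrite <- sqrtPI2 at 3. field. }
      rewrite E. field. lra.
    + rewrite delta_2S, X_2S, padO_odd. unfold dd, cc. rewrite (GH_S (S m)).
      assert (G := GH_pos (S m)). pos m. inr. rewrite Rmult_0_r, Rplus_0_l. simpl pow. field. closenz.
  - rewrite padO_S_odd, delta_odd, X_odd, padO_even. ring.
Qed.

Lemma R5 : Dv (X i1) = X i0.
Proof.
  apply functional_extensionality; intros n. unfold Dv. change (X i1 (S n)) with (i1 n).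
  unfold i0, i1. destruct (parity n) as [m [-> | ->]].
  - rewrite padO_even. destruct m as [|m]. simpl; ring. rewrite X_2S, padE_odd. ring.
  - rewrite padO_odd, X_odd, padE_even. unfold a, b. pos m. inr. field. closenz.
Qed.

Lemma Re : Dv e = e.
Proof.
  apply functional_extensionality; intros n. unfold Dv, e. pos n. inr. field. closenz.
Qed.

Definition Mop (q : nat -> R) := Lin 1 (Lin 1 (X (Dv (Dv q))) 2 (Dv q)) 1 (Lin 1 q (-1) (X q)).

Lemma Mop_formula q n : Mop q n = INR (S n) * INR (S (S n)) * q (S n) + q n - X q n.
Proof. destruct n as [|n]; unfold Mop, Lin, Dv, X; rewrite ?S_INR; simpl; ring. Qed.

Lemma Mq : Mop (Lin 1 i0 (-1) i1) = zero.
Proof.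
  apply functional_extensionality; intros n. rewrite Mop_formula. unfold zero, Lin, i0, i1.
  destruct (parity n) as [m [-> | ->]].
  - rewrite padE_S_even, padO_S_even, padE_even, padO_even. destruct m as [|m].
    + simpl. unfold a, b. simpl. field.
    + unfold Lin. rewrite X_2S, padE_odd, padO_odd. unfold a, b. pos m. inr. simpl pow. field. closenz.
  - rewrite padE_S_odd, padO_S_odd, padE_odd, padO_odd. unfold Lin. rewrite X_odd, padE_even, padO_even.
    unfold a, b. pos m. inr. simpl pow. field. closenz.
Qed.

Lemma ratio_bound s (u : nat -> R) : (forall n, 0 <= u n) ->
  (forall n, u (S n) * (INR (2 * n + s + 1) * INR (2 * n + s + 2)) <= u n) ->
  forall n, u n <= u 0%nat * INR (fact s) / INR (fact (2 * n + s)).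
Proof.
  intros Hp Hr n. induction n.
  - simpl. right. field. apply INR_fact_neq_0.
  - assert (E : fact (2 * S n + s) = ((2 * n + s + 2) * ((2 * n + s + 1) * fact (2 * n + s)))%nat).
    { replace (2 * S n + s)%nat with (S (S (2 * n + s))) by lia. rewrite !fact_simpl. f_equal; lia. }
    rewrite E, !mult_INR.
    assert (H1 : 0 < INR (2 * n + s + 1)) by (apply lt_0_INR; lia).
    assert (H2 : 0 < INR (2 * n + s + 2)) by (apply lt_0_INR; lia).
    assert (H3 := INR_fact_lt_0 (2 * n + s)).
    specialize (Hr n).
    apply Rmult_le_reg_r with (INR (2 * n + s + 1) * INR (2 * n + s + 2)). nra.
    eapply Rle_trans. apply Hr. eapply Rle_trans. apply IHn. right. field. lra.
Qed.

Lemma ENT_padE u : (forall n, 0 <= u n) ->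
  (forall n, u (S n) * (INR (2 * n + 0 + 1) * INR (2 * n + 0 + 2)) <= u n) -> ENT (padE u).
Proof.
  intros Hp Hr. apply (ENT_bound _ (u 0%nat) 1). lra.
  intros k. rewrite pow1. destruct (parity k) as [m [-> | ->]].
  - rewrite padE_even, Rabs_pos_eq by auto. eapply Rle_trans. apply (ratio_bound 0 u Hp Hr m).
    right. simpl (fact 0). replace (2 * m + 0)%nat with (2 * m)%nat by lia. simpl INR. field. apply INR_fact_neq_0.
  - rewrite padE_odd, Rabs_R0. apply Rmult_le_pos. rewrite Rmult_1_r; auto.
    apply Rlt_le, Rinv_0_lt_compat, INR_fact_lt_0.
Qed.

Lemma ENT_padO u : (forall n, 0 <= u n) ->
  (forall n, u (S n) * (INR (2 * n + 1 + 1) * INR (2 * n + 1 + 2)) <= u n) -> ENT (padO u).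
Proof.
  intros Hp Hr. apply (ENT_bound _ (u 0%nat) 1). lra.
  intros k. rewrite pow1. destruct (parity k) as [m [-> | ->]].
  - rewrite padO_even, Rabs_R0. apply Rmult_le_pos. rewrite Rmult_1_r; auto.
    apply Rlt_le, Rinv_0_lt_compat, INR_fact_lt_0.
  - rewrite padO_odd, Rabs_pos_eq by auto. eapply Rle_trans. apply (ratio_bound 1 u Hp Hr m).
    right. simpl (fact 1). simpl INR. field. apply INR_fact_neq_0.
Qed.

Lemma ratio_helper x N Q P : 0 <= x -> 0 < Q -> 0 <= N -> N * P <= Q -> x * (N / Q) * P <= x.
Proof.
  intros Hx HQ HN HNP. replace (x * (N / Q) * P) with (x * ((N * P) / Q)) by (field; lra).
  rewrite <- (Rmult_1_r x) at 2. apply Rmult_le_compat_l; auto.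
  apply (Rmult_le_reg_r Q); auto. unfold Rdiv. rewrite Rmult_assoc, Rinv_l; lra.
Qed.

Lemma a_S n : a (S n) = a n * (1 / (4 * (INR n + 1) ^ 2)).
Proof. unfold a. pos n. inr. simpl pow. field. closenz. Qed.
Lemma jj_S n : jj (S n) = jj n * ((2 * INR n + 1) / (4 * (INR n + 1) ^ 2 * (2 * INR n + 3))).
Proof. unfold jj. replace (2 * S n + 1)%nat with (S (S (2 * n + 1))) by lia. pos n. inr. simpl pow. field. closenz. Qed.
Lemma b_S n : b (S n) = b n * (1 / (4 * (INR n + 1) * (INR n + 2))).
Proof. unfold b. pos n. inr. simpl pow. field. closenz. Qed.
Lemma cc_S n : cc (S n) = cc n * (1 / ((2 * INR n + 3) ^ 2)).
Proof. unfold cc. rewrite (GH_S (S n)). assert (G := GH_pos (S n)). pos n. inr. simpl pow. field. closenz. Qed.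
Lemma dd_S n : dd (S n) = dd n * (1 / ((2 * INR n + 3) * (2 * INR n + 5))).
Proof. unfold dd. rewrite (GH_S (S (S n))), (GH_S (S n)). assert (G := GH_pos (S n)). pos n. inr. simpl pow. field. closenz. Qed.

Lemma a_pos n : 0 <= a n.
Proof. unfold a. pos n. apply Rlt_le, Rinv_0_lt_compat. apply Rmult_lt_0_compat; auto. apply pow_lt; auto. Qed.
Lemma jj_pos n : 0 <= jj n.
Proof. unfold jj. pos n. apply Rlt_le, Rinv_0_lt_compat. apply Rmult_lt_0_compat. apply Rmult_lt_0_compat; auto. apply pow_lt; auto. apply lt_0_INR; lia. Qed.
Lemma b_pos n : 0 <= b n.
Proof. unfold b. pos n. assert (H2 := INR_fact_lt_0 (S n)). apply Rlt_le, Rinv_0_lt_compat. apply Rmult_lt_0_compat. lra. nra. Qed.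
Lemma cc_pos n : 0 <= cc n.
Proof. unfold cc. pos n. assert (G := GH_pos (S n)). apply Rlt_le, Rinv_0_lt_compat. apply Rmult_lt_0_compat. lra. apply pow_lt; auto. Qed.
Lemma dd_pos n : 0 <= dd n.
Proof. unfold dd. pos n. assert (G := GH_pos (S n)). assert (G2 := GH_pos (S (S n))). apply Rlt_le, Rinv_0_lt_compat. apply Rmult_lt_0_compat. lra. nra. Qed.

Lemma ENT_i0 : ENT i0.
Proof.
  apply ENT_padE. apply a_pos. intros n. rewrite a_S. apply ratio_helper. apply a_pos.
  pos n; nra. lra. pos n. inr. nra.
Qed.
Lemma ENT_j : ENT j.
Proof.
  apply ENT_padO. apply jj_pos. intros n. rewrite jj_S. apply ratio_helper. apply jj_pos.
  pos n; nra. pos n; lra. pos n. inr. nra.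
Qed.
Lemma ENT_i1 : ENT i1.
Proof.
  apply ENT_padO. apply b_pos. intros n. rewrite b_S. apply ratio_helper. apply b_pos.
  pos n; nra. lra. pos n. inr. nra.
Qed.
Lemma ENT_l0 : ENT l0.
Proof.
  apply ENT_padO. apply cc_pos. intros n. rewrite cc_S. apply ratio_helper. apply cc_pos.
  pos n; nra. lra. pos n. inr. nra.
Qed.
Lemma ENT_l1 : ENT l1.
Proof.
  apply ENT_X, ENT_padO. apply dd_pos. intros n. rewrite dd_S. apply ratio_helper. apply dd_pos.
  pos n; nra. lra. pos n. inr. nra.
Qed.
Lemma ENT_e : ENT e.
Proof. apply (ENT_bound _ 1 1). lra. intros k. unfold e. rewrite pow1, Rabs_pos_eq. right; field. apply INR_fact_neq_0.
  apply Rlt_le, Rinv_0_lt_compat, INR_fact_lt_0. Qed.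

Definition Gs := Lin 1 (X (conv i0 l1)) (-1) (X (conv i1 l0)).
Definition F2 := Lin 1 j (-1) (Lin 1 (X i0) (PI / 2) Gs).

Lemma DGs : Dv Gs = Lin (- (2 / PI)) (X i1) 0 zero.
Proof.
  unfold Gs. rewrite Dv_Lin. rewrite <- (conv_X_r i0 l1), <- (conv_X_l i1 l0).
  rewrite !Dv_conv. rewrite R1, R3, R5, R4. rewrite conv_Lin_r, conv_delta_r.
  rewrite !conv_X_r, !conv_X_l.
  apply functional_extensionality; intros n. unfold Lin, zero. ring.
Qed.

Lemma F2_zero : F2 = zero.
Proof.
  apply Dv_eq_zero.
  - unfold F2. rewrite !Dv_Lin, DGs, Dv_X, R1, R2.
    apply functional_extensionality; intros n. unfold Lin, zero. field.
    apply Rgt_not_eq, PI_RGT_0.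
  - unfold F2, Gs, Lin, j, padO. cbn [X Nat.even]. ring.
Qed.

Definition g := Lin 1 (Lin 1 delta (-1) i0) 1 j.
Definition q := Lin 1 i0 (-1) i1.

Lemma Dg : Dv g = q.
Proof.
  unfold g, q. rewrite !Dv_Lin, Dv_delta, R1, R2.
  apply functional_extensionality; intros n. unfold Lin, zero. ring.
Qed.

Lemma Dconv_e r : Dv (conv e r) = conv e (Lin 1 r 1 (Dv r)).
Proof. rewrite Dv_conv, Re, conv_Lin_r. reflexivity. Qed.

Definition Lop f := Lin 1 (Lin 1 (X (Dv (Dv f))) 2 (Dv f)) (-1) (Lin 2 (X (Dv f)) 1 f).

Lemma Lop_conv_e r : Lop (conv e r) = conv e (Mop r).
Proof.
  unfold Lop. rewrite !Dconv_e. rewrite <- !conv_X_r. rewrite <- !conv_Lin_r. f_equal.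
  unfold Mop. rewrite !Dv_Lin, !X_Lin.
  apply functional_extensionality; intros n. unfold Lin. ring.
Qed.

Lemma Lop_formula f n : Lop f n = INR (S n) * INR (S (S n)) * f (S n) - (2 * INR n + 1) * f n.
Proof. destruct n as [|n]; unfold Lop, Lin, Dv, X; rewrite ?S_INR; simpl; ring. Qed.

Lemma Lop_unique f h : Lop f = zero -> Lop h = zero -> f 0%nat = h 0%nat -> f = h.
Proof.
  intros Hf Hh H0. apply functional_extensionality; intros n. induction n; auto.
  assert (E1 := f_equal (fun u => u n) Hf). assert (E2 := f_equal (fun u => u n) Hh).
  simpl in E1, E2. rewrite Lop_formula in E1, E2. unfold zero in E1, E2.
  assert (P : 0 < INR (S n) * INR (S (S n))) by (apply Rmult_lt_0_compat; apply lt_0_INR; lia).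
  apply (Rmult_eq_reg_l (INR (S n) * INR (S (S n)))). rewrite IHn in E1. lra. lra.
Qed.

Lemma cat_S n : Catalan (S n) * (INR n + 2) = 2 * (2 * INR n + 1) * Catalan n.
Proof.
  unfold Catalan, Binomial.C.
  replace (2 * S n - S n)%nat with (S n) by lia. replace (2 * n - n)%nat with n by lia.
  replace (2 * S n)%nat with (S (S (2 * n))) by lia. replace (S n + 1)%nat with (S (S n)) by lia.
  replace (n + 1)%nat with (S n) by lia.
  assert (H2 := INR_fact_lt_0 (2 * n)). pos n. inr. field. closenz.
Qed.

Definition w (k : nat) : R := Catalan k / 2 ^ k / INR (fact k).

Lemma Lop_w : Lop w = zero.
Proof.
  apply functional_extensionality; intros n. rewrite Lop_formula. unfold zero, w.
  assert (C := cat_S n). pos n.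
  assert (E : Catalan (S n) = 2 * (2 * INR n + 1) * Catalan n / (INR n + 2)) by
    (apply (Rmult_eq_reg_r (INR n + 2)); [rewrite C; field | ]; lra).
  rewrite E. inr. simpl pow. field. closenz.
Qed.

Lemma conv_e_q : conv e q = w.
Proof.
  apply Lop_unique.
  - rewrite Lop_conv_e. unfold q. rewrite Mq. apply conv_zero_r.
  - apply Lop_w.
  - unfold conv, e, q, w, Lin, i0, i1, padE, padO, a, Catalan, Binomial.C. simpl. field.
Qed.

Fixpoint Wc (k : nat) : R := match k with O => 0 | S k => Wc k + Catalan k / 2 ^ k end.
Definition h (k : nat) : R := Wc k / INR (fact k).

Lemma Dh : Dv h = Lin 1 h 1 w.
Proof.
  apply functional_extensionality; intros n. unfold Dv, Lin, h, w. simpl Wc.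
  pos n. inr. field. closenz.
Qed.

Lemma h_eq : h = conv e g.
Proof.
  assert (Z : Lin 1 h (-1) (conv e g) = zero).
  { apply Dv_eq_self.
    - rewrite Dv_Lin, Dh, Dconv_e, Dg, conv_Lin_r, conv_e_q.
      apply functional_extensionality; intros n. unfold Lin. ring.
    - unfold Lin, h, conv, e, g, Lin, delta, i0, j, padE, padO, a. simpl. field. }
  apply functional_extensionality; intros n. assert (E := f_equal (fun u => u n) Z).
  unfold Lin, zero in E. simpl in E. lra.
Qed.

Lemma Cdiv_RtoC (z : C) r : r <> 0 -> (z / RtoC r = RtoC (/ r) * z)%C.
Proof.
  intros Hr. destruct z as [u v]. unfold Cdiv, Cinv, Cmult, RtoC. simpl.
  f_equal; field; auto.
Qed.

Lemma Cpow_scal (y : C) r m : ((y * RtoC r) ^ m = RtoC (r ^ m) * y ^ m)%C.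
Proof.
  induction m; simpl. apply injective_projections; simpl; ring.
  rewrite IHm. rewrite RtoC_mult. ring.
Qed.

Lemma half_pow_odd n : (/ 2) ^ (2 * n + 1) = / (2 * 4 ^ n).
Proof.
  induction n. simpl. field.
  replace (2 * S n + 1)%nat with (S (S (2 * n + 1))) by lia. simpl pow. simpl pow in IHn.
  rewrite IHn. field. apply pow_nonzero; lra.
Qed.

Lemma ENT_Lin a0 c b0 d : ENT c -> ENT d -> ENT (Lin a0 c b0 d).
Proof. apply ENT_lin. Qed.
Lemma PSC_Lin a0 b0 c d y : ENT c -> ENT d ->
  PSC (Lin a0 c b0 d) y = (RtoC a0 * PSC c y + RtoC b0 * PSC d y)%C.
Proof. apply PSC_lin. Qed.

Lemma Cexp_PSC y : Cexp y = PSC e y.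
Proof.
  unfold Cexp, PSC. apply CSeries_ext. intros k. unfold term, e.
  apply Cdiv_RtoC, INR_fact_neq_0.
Qed.

Lemma I0_PSC y : BesselI0 y = PSC i0 y.
Proof.
  unfold BesselI0, i0. rewrite <- CSeries_padE by apply ENT_i0. apply CSeries_ext. intros n.
  unfold a. apply Cdiv_RtoC. apply Rgt_not_eq. pos n. apply Rmult_lt_0_compat. apply pow_lt; lra.
  apply pow_lt; auto.
Qed.

Lemma J_PSC y : CSeries (fun n => y ^ (2 * n + 1) /
                     RtoC (4 ^ n * (INR (fact n)) ^ 2 * INR (2 * n + 1))%R)%C = PSC j y.
Proof.
  unfold j. rewrite <- CSeries_padO by apply ENT_j. apply CSeries_ext. intros n.
  unfold jj. apply Cdiv_RtoC. apply Rgt_not_eq. pos n. apply Rmult_lt_0_compat. apply Rmult_lt_0_compat. apply pow_lt; lra.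
  apply pow_lt; auto. apply lt_0_INR; lia.
Qed.

Lemma ydiv2 (y : C) : (y / RtoC 2 = y * RtoC (/ 2))%C.
Proof. rewrite Cdiv_RtoC by lra. ring. Qed.

Lemma I1_PSC y : BesselI1 y = PSC i1 y.
Proof.
  unfold BesselI1, i1. rewrite <- CSeries_padO by apply ENT_i1. apply CSeries_ext. intros n.
  rewrite ydiv2, Cpow_scal, half_pow_odd. replace (n + 1)%nat with (S n) by lia.
  assert (P : 0 < INR (fact n) * INR (fact (S n))) by (apply Rmult_lt_0_compat; apply INR_fact_lt_0).
  rewrite Cdiv_RtoC by lra. rewrite Cmult_assoc, <- RtoC_mult. unfold b. f_equal. f_equal.
  pos n. field. repeat split; intro; nra.
Qed.

Lemma L0_PSC y : StruveL0 y = PSC l0 y.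
Proof.
  unfold StruveL0, l0. rewrite <- CSeries_padO by apply ENT_l0. apply CSeries_ext. intros n.
  rewrite ydiv2, Cpow_scal, half_pow_odd. replace (n + 1)%nat with (S n) by lia.
  assert (G := GH_pos (S n)).
  rewrite Cdiv_RtoC by (apply pow_nonzero; lra). rewrite Cmult_assoc, <- RtoC_mult. unfold cc. f_equal. f_equal.
  pos n. field. repeat split; intro; nra.
Qed.

Lemma half_pow_even2 n : (/ 2) ^ (2 * n + 2) = / (4 * 4 ^ n).
Proof.
  replace (2 * n + 2)%nat with (S (2 * n + 1)) by lia. rewrite <- tech_pow_Rmult, half_pow_odd.
  field. apply pow_nonzero; lra.
Qed.

Lemma l1_padE : l1 = padE (X dd).
Proof.
  apply functional_extensionality; intros n. unfold l1.
  destruct (parity n) as [m [-> | ->]].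
  - rewrite padE_even. destruct m as [|m]. reflexivity. rewrite X_2S, padO_odd. reflexivity.
  - rewrite padE_odd, X_odd, padO_even. reflexivity.
Qed.

Lemma CSeries_shift (t : nat -> C) : t 0%nat = RtoC 0 -> CSeries t = CSeries (fun k => t (S k)).
Proof.
  intros H. unfold CSeries. f_equal; apply Series_incr_1_aux; rewrite H; reflexivity.
Qed.

Lemma L1_PSC y : StruveL1 y = PSC l1 y.
Proof.
  assert (EN : ENT (padE (X dd))) by (rewrite <- l1_padE; apply ENT_l1).
  rewrite l1_padE, <- CSeries_padE by exact EN.
  rewrite (CSeries_shift (fun n => RtoC (X dd n) * y ^ (2 * n))%C) by (simpl; ring).
  unfold StruveL1. apply CSeries_ext. intros n. cbn [X].
  rewrite ydiv2, Cpow_scal, half_pow_even2. replace (n + 1)%nat with (S n) by lia.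
  replace (n + 2)%nat with (S (S n)) by lia. replace (2 * S n)%nat with (2 * n + 2)%nat by lia.
  assert (G := GH_pos (S n)). assert (G2 := GH_pos (S (S n))).
  rewrite Cdiv_RtoC by (apply Rgt_not_eq; nra). rewrite Cmult_assoc, <- RtoC_mult. unfold dd. f_equal. f_equal.
  pos n. field. repeat split; intro; nra.
Qed.

Lemma PSC_zero y : PSC zero y = RtoC 0.
Proof.
  rewrite (PSC_ext zero (Lin 0 delta 0 delta)) by (intros; unfold Lin, zero; ring).
  rewrite PSC_Lin by apply ENT_delta. apply injective_projections; simpl; ring.
Qed.

Lemma ENT_Gs : ENT Gs.
Proof. unfold Gs. apply ENT_Lin; apply ENT_X, ENT_conv; auto using ENT_i0, ENT_i1, ENT_l0, ENT_l1. Qed.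

Lemma Part2_PSC y :
  PSC j y = (y * PSC i0 y + RtoC (PI / 2) * (y * (PSC i0 y * PSC l1 y) - y * (PSC i1 y * PSC l0 y)))%C.
Proof.
  assert (Z := f_equal (fun f => PSC f y) F2_zero). simpl in Z. rewrite PSC_zero in Z.
  unfold F2 in Z.
  rewrite PSC_Lin in Z by (try apply ENT_Lin; auto using ENT_j, ENT_X, ENT_i0, ENT_Gs).
  rewrite (PSC_Lin 1 (PI/2)) in Z by (auto using ENT_X, ENT_i0, ENT_Gs).
  unfold Gs in Z. rewrite PSC_Lin in Z by (apply ENT_X, ENT_conv; auto using ENT_i0, ENT_i1, ENT_l0, ENT_l1).
  rewrite <- !PSC_X in Z by (try apply ENT_conv; auto using ENT_i0, ENT_i1, ENT_l0, ENT_l1).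
  rewrite <- !PSC_conv in Z by (auto using ENT_i0, ENT_i1, ENT_l0, ENT_l1).
  set (J := PSC j y) in *.
  set (S := (y * PSC i0 y + RtoC (PI / 2) * (y * (PSC i0 y * PSC l1 y) - y * (PSC i1 y * PSC l0 y)))%C).
  assert (H : (J - S = RtoC 0)%C).
  { rewrite <- Z. unfold S. apply injective_projections; simpl; ring. }
  transitivity (J - S + S)%C. ring. rewrite H. apply injective_projections; simpl; ring.
Qed.

Lemma Part2 y :
  (1 - BesselI0 y + CSeries (fun n => y ^ (2 * n + 1) /
                  RtoC (4 ^ n * (INR (fact n)) ^ 2 * INR (2 * n + 1))%R))%C
  = (1 + (y - 1) * BesselI0 y
     + RtoC PI * y / 2 * (BesselI0 y * StruveL1 y - BesselI1 y * StruveL0 y))%C.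
Proof.
  rewrite J_PSC, I0_PSC, I1_PSC, L0_PSC, L1_PSC, Part2_PSC.
  assert (E : (RtoC PI * y / 2 = RtoC (PI / 2) * y)%C).
  { destruct y as [u v]. unfold Cdiv, Cinv, Cmult, RtoC. simpl. f_equal; field. }
  rewrite E. ring.
Qed.

Definition sc (k : nat) : R := Catalan k / 2 ^ k.

Lemma sc_bound k : 0 <= sc k <= 2 ^ k.
Proof.
  induction k.
  - unfold sc, Catalan, Binomial.C. simpl. split; [|right]; field_simplify; lra.
  - assert (C := cat_S k). pos k.
    assert (E : sc (S k) = sc k * ((2 * INR k + 1) / (INR k + 2))).
    { assert (Cs : Catalan (S k) = 2 * (2 * INR k + 1) * Catalan k / (INR k + 2)) by
        (apply (Rmult_eq_reg_r (INR k + 2)); [rewrite C; field | ]; lra).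
      unfold sc. rewrite Cs. simpl pow. field. split; [lra | apply pow_nonzero; lra]. }
    rewrite E. simpl pow. destruct IHk as [I1 I2]. split.
    + apply Rmult_le_pos; auto. apply Rmult_le_pos. lra. apply Rlt_le, Rinv_0_lt_compat. lra.
    + assert (R : (2 * INR k + 1) / (INR k + 2) <= 2).
      { apply (Rmult_le_reg_r (INR k + 2)). lra. unfold Rdiv. rewrite Rmult_assoc, Rinv_l; lra. }
      assert (0 <= (2 * INR k + 1) / (INR k + 2)).
      { apply Rmult_le_pos. lra. apply Rlt_le, Rinv_0_lt_compat. lra. }
      nra.
Qed.

Lemma Wc_bound n : 0 <= Wc n <= 2 ^ n.
Proof.
  induction n. simpl; lra.
  simpl. fold (sc n). destruct (sc_bound n). lra.
Qed.

Lemma ENT_h : ENT h.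
Proof.
  apply (ENT_bound _ 1 2). lra. intros k. unfold h. destruct (Wc_bound k).
  rewrite Rabs_pos_eq. unfold Rdiv. rewrite Rmult_1_l. apply Rmult_le_compat_r; auto.
  apply Rlt_le, Rinv_0_lt_compat, INR_fact_lt_0.
  apply Rmult_le_pos; auto. apply Rlt_le, Rinv_0_lt_compat, INR_fact_lt_0.
Qed.

Lemma ENT_g : ENT g.
Proof. unfold g. apply ENT_Lin. apply ENT_Lin. apply ENT_delta. apply ENT_i0. apply ENT_j. Qed.

Lemma G_PSC y : (1 - BesselI0 y + CSeries (fun n => y ^ (2 * n + 1) /
                  RtoC (4 ^ n * (INR (fact n)) ^ 2 * INR (2 * n + 1))%R))%C = PSC g y.
Proof.
  rewrite J_PSC, I0_PSC. unfold g.
  rewrite PSC_Lin by (try apply ENT_Lin; auto using ENT_delta, ENT_i0, ENT_j).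
  rewrite PSC_Lin by (auto using ENT_delta, ENT_i0, ENT_j).
  rewrite PSC_delta. apply injective_projections; simpl; ring.
Qed.

Lemma Target_PSC y : (Cexp y * PSC g y)%C = PSC h y.
Proof. rewrite Cexp_PSC, PSC_conv by (auto using ENT_e, ENT_g). rewrite h_eq. reflexivity. Qed.

Definition tail (r : R) (N : nat) : R := Series (fun k => r ^ (S N + k) / INR (fact (S N + k))).

Lemma tail_bound (f : nat -> R) r N : 0 <= r ->
  (forall k, Rabs (f k) <= r ^ k / INR (fact k)) ->
  Rabs (Series f - sum_n f N) <= tail r N.
Proof.
  intros Hr Hf.
  assert (Ex : ex_series (fun k => r ^ k / INR (fact k))) by apply ex_exp_series.
  assert (Exf : ex_series f).
  { apply (@ex_series_le R_AbsRing R_CompleteNormedModule _ _ Hf Ex). }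
  rewrite (Series_incr_n f (S N)) by (auto; lia). simpl pred. rewrite sum_n_Reals.
  replace (sum_f_R0 f N + Series (fun k => f (S N + k)%nat) - sum_f_R0 f N)
    with (Series (fun k => f (S N + k)%nat)) by ring.
  assert (Ex2 : ex_series (fun k => r ^ (S N + k) / INR (fact (S N + k)))).
  { apply (ex_series_incr_n (fun k => r ^ k / INR (fact k)) (S N)). exact Ex. }
  eapply Rle_trans. apply Series_Rabs.
  - apply (@ex_series_le R_AbsRing R_CompleteNormedModule _ (fun k => r ^ (S N + k) / INR (fact (S N + k)))).
    intros k. change norm with Rabs. simpl. rewrite Rabs_Rabsolu. apply Hf. exact Ex2.
  - apply Series_le. intros k. split. apply Rabs_pos. apply Hf. exact Ex2.
Qed.

Lemma tail_lim r : is_lim_seq (tail r) 0.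
Proof.
  set (a := fun k => r ^ k / INR (fact k)).
  assert (Ex : ex_series a) by apply ex_exp_series.
  apply is_lim_seq_ext with (fun N => Series a - sum_f_R0 a N).
  - intros N. unfold tail. rewrite (Series_incr_n a (S N)) by (auto; lia). simpl pred. unfold a. ring.
  - replace 0 with (Series a - Series a) by ring. apply is_lim_seq_minus'.
    apply is_lim_seq_const.
    assert (H := Series_correct a Ex). unfold is_series in H.
    eapply is_lim_seq_ext. intros n. apply sum_n_Reals. exact H.
Qed.

Lemma tail_scale r N : 0 <= r -> 2 ^ (S N) * tail r N <= tail (2 * r) N.
Proof.
  intros Hr. unfold tail. rewrite <- Series_scal_l. apply Series_le.
  - intros k. assert (F := INR_fact_lt_0 (S N + k)). split.
    + apply Rmult_le_pos. apply pow_le; lra. apply Rmult_le_pos. apply pow_le; lra. apply Rlt_le, Rinv_0_lt_compat; lra.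
    + rewrite Rpow_mult_distr. unfold Rdiv. rewrite <- !Rmult_assoc. apply Rmult_le_compat_r.
      apply Rlt_le, Rinv_0_lt_compat; lra. apply Rmult_le_compat_r. apply pow_le; lra.
      apply Rle_pow. lra. lia.
  - apply (ex_series_incr_n (fun k => (2 * r) ^ k / INR (fact k)) (S N)). apply ex_exp_series.
Qed.

Lemma W_tail_lim (f : nat -> R) r : 0 <= r ->
  (forall k, Rabs (f k) <= r ^ k / INR (fact k)) ->
  is_lim_seq (fun N => Wc (S N) * (Series f - sum_n f N)) 0.
Proof.
  intros Hr Hf.
  apply is_lim_seq_le_le with (fun N => - tail (2 * r) N) (tail (2 * r)).
  - intros N. assert (B := tail_bound f r N Hr Hf). assert (Sc := tail_scale r N Hr).
    destruct (Wc_bound (S N)) as [W1 W2].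
    set (x := Series f - sum_n f N) in *.
    assert (Hx : Rabs (Wc (S N) * x) <= tail (2 * r) N).
    { rewrite Rabs_mult, Rabs_pos_eq by auto. eapply Rle_trans. 2: exact Sc.
      apply Rmult_le_compat; auto. apply Rabs_pos. }
    assert (H1 := Rle_abs (Wc (S N) * x)). assert (H2 := Rle_abs (- (Wc (S N) * x))).
    rewrite Rabs_Ropp in H2. lra.
  - assert (H := proj1 (is_lim_seq_opp _ _) (tail_lim (2 * r))). simpl in H. replace (-0) with 0 in H by ring. exact H.
  - apply tail_lim.
Qed.

Lemma Cplus_eq (x z : C) : plus x z = (x + z)%C.
Proof. reflexivity. Qed.

Lemma Rrem_S n y : Rrem (S n) y = (Rrem n y - y ^ (S n) / RtoC (INR (fact (S n))))%C.
Proof. unfold Rrem. rewrite sum_Sn, Cplus_eq. match goal with |- ?x = ?z => change (@eq C x z) end. ring. Qed.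

Lemma psum y N : sum_n (fun n => (RtoC (Catalan n / 2 ^ n) * Rrem n y)%C) N
   = (RtoC (Wc (S N)) * Rrem N y + sum_n (term h y) N)%C.
Proof.
  induction N.
  - rewrite !sum_O. unfold term, h. simpl Wc. replace (0 / INR (fact 0)) with 0 by (simpl; field).
    rewrite Rplus_0_l. match goal with |- ?x = ?z => change (@eq C x z) end. replace (2 ^ 0) with 1 by reflexivity. change (y ^ 0)%C with (RtoC 1). ring.
  - assert (Ht : term h y (S N) = (RtoC (Wc (S N)) * (y ^ (S N) / RtoC (INR (fact (S N)))))%C).
    { unfold term, h. rewrite Cdiv_RtoC by apply INR_fact_neq_0. unfold Rdiv. rewrite RtoC_mult. ring. }
    rewrite !sum_Sn, IHN, Ht, Rrem_S.
    change (Wc (S (S N))) with (Wc (S N) + Catalan (S N) / 2 ^ (S N)).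
    rewrite RtoC_plus, !Cplus_eq.
    match goal with |- ?x = ?z => change (@eq C x z) end. change (@plus _ ?x ?z) with (Cplus x z). ring.
Qed.

Lemma fst_RtoC_mul w (z : C) : fst (RtoC w * z)%C = w * fst z.
Proof. destruct z; simpl; ring. Qed.
Lemma snd_RtoC_mul w (z : C) : snd (RtoC w * z)%C = w * snd z.
Proof. destruct z; simpl; ring. Qed.

Lemma fst_plus (x z : C) : fst (x + z)%C = fst x + fst z.
Proof. reflexivity. Qed.
Lemma snd_plus (x z : C) : snd (x + z)%C = snd x + snd z.
Proof. reflexivity. Qed.

Lemma fst_minus (x z : C) : fst (x - z)%C = fst x - fst z.
Proof. destruct x, z; simpl; ring. Qed.
Lemma snd_minus (x z : C) : snd (x - z)%C = snd x - snd z.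
Proof. destruct x, z; simpl; ring. Qed.

Lemma sum_tE y N : sum_n (fun k => (y ^ k / RtoC (INR (fact k)))%C) N = sum_n (term e y) N.
Proof. apply sum_n_ext. intros k. unfold term, e. apply Cdiv_RtoC, INR_fact_neq_0. Qed.

Lemma fe_bound y k : Rabs (fst (term e y k)) <= Cmod y ^ k / INR (fact k).
Proof.
  rewrite fst_term, Rabs_mult. unfold e. rewrite Rabs_pos_eq.
  unfold Rdiv. rewrite Rmult_comm. apply Rmult_le_compat_r. apply Rlt_le, Rinv_0_lt_compat, INR_fact_lt_0.
  apply fst_pow_bound. apply Rlt_le, Rinv_0_lt_compat, INR_fact_lt_0.
Qed.
Lemma se_bound y k : Rabs (snd (term e y k)) <= Cmod y ^ k / INR (fact k).
Proof.
  rewrite snd_term, Rabs_mult. unfold e. rewrite Rabs_pos_eq.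
  unfold Rdiv. rewrite Rmult_comm. apply Rmult_le_compat_r. apply Rlt_le, Rinv_0_lt_compat, INR_fact_lt_0.
  apply snd_pow_bound. apply Rlt_le, Rinv_0_lt_compat, INR_fact_lt_0.
Qed.

Lemma Part1 y : is_series (fun n => (RtoC (Catalan n / 2 ^ n) * Rrem n y)%C) (Cexp y * PSC g y)%C.
Proof.
  rewrite Target_PSC. unfold is_series.
  apply (filterlim_ext (fun N => (RtoC (Wc (S N)) * Rrem N y + sum_n (term h y) N)%C)).
  { intros N. symmetry. apply psum. }
  unfold PSC at 1, CSeries. apply lim_C.
  - apply is_lim_seq_ext with (fun N => Wc (S N) * (Series (fun k => fst (term e y k)) - sum_n (fun k => fst (term e y k)) N)
        + sum_n (fun k => fst (term h y k)) N).
    { intros N. symmetry. rewrite fst_plus, fst_RtoC_mul, fst_sum_n. f_equal. f_equal.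
      unfold Rrem. rewrite Cexp_PSC, sum_tE, fst_minus, fst_sum_n. reflexivity. }
    rewrite <- (Rplus_0_l (Series (fun k => fst (term h y k)))). apply is_lim_seq_plus'.
    + apply (W_tail_lim _ (Cmod y)). apply Cmod_ge_0. apply fe_bound.
    + apply (Series_correct _ (ex_fst_term _ y ENT_h)).
  - apply is_lim_seq_ext with (fun N => Wc (S N) * (Series (fun k => snd (term e y k)) - sum_n (fun k => snd (term e y k)) N)
        + sum_n (fun k => snd (term h y k)) N).
    { intros N. symmetry. rewrite snd_plus, snd_RtoC_mul, snd_sum_n. f_equal. f_equal.
      unfold Rrem. rewrite Cexp_PSC, sum_tE, snd_minus, snd_sum_n. reflexivity. }
    rewrite <- (Rplus_0_l (Series (fun k => snd (term h y k)))). apply is_lim_seq_plus'.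
    + apply (W_tail_lim _ (Cmod y)). apply Cmod_ge_0. apply se_bound.
    + apply (Series_correct _ (ex_snd_term _ y ENT_h)).
Qed.


Open Scope C_scope.

Theorem mainTheorem15 (y : C) :
  is_series (fun n => RtoC (Catalan n / 2 ^ n)%R * Rrem n y)
    (Cexp y * (1 - BesselI0 y
               + CSeries (fun n => y ^ (2 * n + 1) /
                     RtoC (4 ^ n * (INR (fact n)) ^ 2 * INR (2 * n + 1))%R)))
  /\
  Cexp y * (1 - BesselI0 y
            + CSeries (fun n => y ^ (2 * n + 1) /
                  RtoC (4 ^ n * (INR (fact n)) ^ 2 * INR (2 * n + 1))%R))
  = Cexp y * (1 + (y - 1) * BesselI0 y
              + RtoC PI * y / 2 * (BesselI0 y * StruveL1 y - BesselI1 y * StruveL0 y)).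
Proof.
  split.
  - rewrite G_PSC. apply Part1.
  - rewrite Part2. reflexivity.
Qed.
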